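(* Let $p_c,q_c\in\mathbb{R}_{\ge 0}$, let $M=\begin{bmatrix} p_c & q_c\\ -q_c & p_c\end{bmatrix}$, and let $v_{\min}\in\mathbb{R}_{>0}$. Consider the constant power load (CPL) operator $y_{cp}$ mapping a voltage $v=[v_d,v_q]^\top$ to the current $i=y_{cp}(v)=\dfrac{1}{\|v\|_2^2}Mv$, defined on inputs satisfying $\|v\|_2\ge v_{\min}$. Then $\operatorname{SRG}(y_{cp})\subseteq \operatorname{SRG}(\widehat{y_{cp}})$, where $$\operatorname{SRG}(\widehat{y_{cp}})=\Big\{re^{\mathrm{j}\alpha}\;\Big|\;\alpha\in[-\pi,\pi],\ 0\le r\le \frac{\sigma_{\max}(M)}{v_{\min}^2}\Big\},$$ i.e. the closed disk in $\mathbb{C}$ centred at the origin of radius $\sigma_{\max}(M)/v_{\min}^2$.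
   Context: $\sigma_{\max}(M)$ denotes the largest singular value of $M$, and $\|\cdot\|_2$ the 2-norm (the paper calls it the $\mathcal{L}_2$-norm). For a Hilbert space with inner product $\langle\cdot,\cdot\rangle$, the angle between nonzero vectors is $\angle(z_1,z_2)=\arccos\big(\Re\langle z_1,z_2\rangle/(\|z_1\|_2\|z_2\|_2)\big)$. The scaled relative graph of an operator $A$ is the subset of $\mathbb{C}$ $$\operatorname{SRG}(A)=\Big\{\frac{\|y_2-y_1\|_2}{\|u_2-u_1\|_2}\exp\big[\pm\mathrm{j}\,\angle(u_2-u_1,\,y_2-y_1)\big]\Big\},$$ ranging over all pairs of distinct inputs $u_1,u_2$ in the domain of $A$ with $y_k=A(u_k)$ (and $y_2\neq y_1$). *)

(* Defs.v *)
From mathcomp Require Import all_boot all_order all_algebra.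
From mathcomp Require Import all_classical all_reals all_analysis.
Set Implicit Arguments. Unset Strict Implicit. Unset Printing Implicit Defensive.
Import Order.TTheory GRing.Theory Num.Theory.
From mathcomp Require Export complex.
Local Open Scope ring_scope.
Local Open Scope classical_set_scope.
Local Open Scope complex_scope.

Definition inner (R : realType) (n : nat) (u v : 'cV[R]_n) : R := (u^T *m v) 0 0.

Definition norm2 (R : realType) (n : nat) (u : 'cV[R]_n) : R := Num.sqrt (inner u u).

Definition angle (R : realType) (n : nat) (u v : 'cV[R]_n) : R :=
  acos (inner u v / (norm2 u * norm2 v)).

Definition expj (R : realType) (t : R) : R[i] := (cos t +i* sin t)%C.

Definition SRG (R : realType) (n : nat) (D : set 'cV[R]_n) (A : 'cV[R]_n -> 'cV[R]_n)
  : set R[i] :=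
  [set z | exists u1 u2, [/\ D u1, D u2, u1 != u2, A u2 != A u1 &
     let g := norm2 (A u2 - A u1) / norm2 (u2 - u1) in
     let th := angle (u2 - u1) (A u2 - A u1) in
     z = g%:C * expj th \/ z = g%:C * expj (- th)]].

Definition sigma_max (R : realType) (m n : nat) (M : 'M[R]_(m, n)) : R :=
  Num.sqrt (sup [set l : R | eigenvalue (M^T *m M) l]).

Definition Mcpl (R : realType) (pc qc : R) : 'M[R]_2 :=
  \matrix_(i < 2, j < 2)
    (if i == j then pc else if (i == 0 :> 'I_2) then qc else - qc).

Definition ycp (R : realType) (pc qc : R) (v : 'cV[R]_2) : 'cV[R]_2 :=
  (norm2 v ^+ 2)^-1 *: (Mcpl pc qc *m v).

Definition ycp_dom (R : realType) (vmin : R) : set 'cV[R]_2 :=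
  [set v | vmin <= norm2 v].

Definition SRG_hat (R : realType) (pc qc vmin : R) : set R[i] :=
  [set z | exists r alpha : R,
     [/\ - pi <= alpha <= pi, 0 <= r <= sigma_max (Mcpl pc qc) / vmin ^+ 2 &
         z = r%:C * expj alpha]].

(* Main.v *)
Require Import Defs.
From mathcomp Require Import all_boot all_order all_algebra.
From mathcomp Require Import all_classical all_reals all_analysis.
Import Order.TTheory GRing.Theory Num.Theory.
From mathcomp Require Import complex ring lra.
Local Open Scope ring_scope.
Local Open Scope classical_set_scope.
Local Open Scope complex_scope.

Section S.
Variable R : realType.
Implicit Types pc qc : R.
Implicit Types u v : 'cV[R]_2.

Lemma sum2 (f : 'I_2 -> R) : \sum_(k < 2) f k = f 0 + f 1.
Proof.
rewrite big_ord_recr big_ord_recr big_ord0 /= add0r.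
by congr (f _ + f _); apply: val_inj.
Qed.

Lemma inner2 u v : inner u v = u 0 0 * v 0 0 + u 1 0 * v 1 0.
Proof. by rewrite /inner !mxE sum2 !mxE. Qed.

Lemma inner_ge0 u : 0 <= inner u u.
Proof. rewrite inner2; nra. Qed.

Lemma norm2_ge0 u : 0 <= norm2 u.
Proof. exact: sqrtr_ge0. Qed.

Lemma sqr_norm2 u : norm2 u ^+ 2 = inner u u.
Proof. by rewrite /norm2 sqr_sqrtr // inner_ge0. Qed.

Lemma norm2_gt0 u : u != 0 -> 0 < norm2 u.
Proof.
move=> hu; rewrite lt_neqAle norm2_ge0 andbT; apply/negP => /eqP h0.
move/negP: hu; apply; apply/eqP.
have : inner u u = 0 by rewrite -sqr_norm2 -h0 expr0n.
rewrite inner2 => h.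
have h0' : u 0 0 = 0 by nra.
have h1' : u 1 0 = 0 by nra.
apply/matrixP => i j; rewrite (ord1 j) mxE.
case: i => [[|[|k]] Hi] //.
- by rewrite -h0'; congr (u _ _); apply: val_inj.
- by rewrite -h1'; congr (u _ _); apply: val_inj.
Qed.

Lemma CS u v : `|inner u v| <= norm2 u * norm2 v.
Proof.
rewrite /norm2 -sqrtrM ?inner_ge0 // -sqrtr_sqr ler_sqrt; last first.
  by apply: mulr_ge0; apply: inner_ge0.
rewrite !inner2; have := sqr_ge0 (u 0 0 * v 1 0 - u 1 0 * v 0 0); nra.
Qed.

Lemma MtM pc qc : (Mcpl pc qc)^T *m Mcpl pc qc = (pc ^+ 2 + qc ^+ 2)%:M.
Proof.
apply/matrixP => i j; rewrite !mxE sum2 !mxE.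
case: i => [[|[|k]] Hi] //; case: j => [[|[|l]] Hj] //= ; rewrite ?mxE /=; ring.
Qed.

Lemma sigma_maxE pc qc : sigma_max (Mcpl pc qc) = Num.sqrt (pc ^+ 2 + qc ^+ 2).
Proof.
rewrite /sigma_max MtM.
have -> : [set l : R | eigenvalue ((pc ^+ 2 + qc ^+ 2)%:M : 'M[R]_2) l] = [set pc ^+ 2 + qc ^+ 2].
  apply/seteqP; split => l /=.
    move/eigenvalueP => [v hv vn0].
    rewrite mul_mx_scalar in hv.
    apply/eqP; rewrite eq_sym -subr_eq0; apply/negP => hne.
    move/negP: vn0; apply; apply/eqP.
    have : (pc ^+ 2 + qc ^+ 2 - l) *: v = 0 by rewrite scalerBl hv subrr.
    by move/eqP; rewrite scaler_eq0 (negbTE (introN idP hne)) => /eqP.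
  move=> ->; apply/eigenvalueP; exists (const_mx 1).
    by rewrite mul_mx_scalar.
  apply/negP => /eqP/matrixP/(_ 0 0); rewrite !mxE => /eqP; rewrite oner_eq0.
  done.
by rewrite sup1.
Qed.

Lemma ycp0 pc qc v : ycp pc qc v 0 0 = (pc * v 0 0 + qc * v 1 0) / (v 0 0 ^+ 2 + v 1 0 ^+ 2).
Proof. rewrite /ycp sqr_norm2 inner2 !mxE sum2 !mxE /=. rewrite mulrC; congr (_ * _); ring. Qed.

Lemma ycp1 pc qc v : ycp pc qc v 1 0 = (- qc * v 0 0 + pc * v 1 0) / (v 0 0 ^+ 2 + v 1 0 ^+ 2).
Proof. rewrite /ycp sqr_norm2 inner2 !mxE sum2 !mxE /=. rewrite mulrC; congr (_ * _); ring. Qed.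

Lemma innerB2 u v : inner (u - v) (u - v) = (u 0 0 - v 0 0) ^+ 2 + (u 1 0 - v 1 0) ^+ 2.
Proof. by rewrite inner2 !mxE !expr2. Qed.

Lemma ident pc qc (a0 a1 b0 b1 : R) : a0 ^+ 2 + a1 ^+ 2 != 0 -> b0 ^+ 2 + b1 ^+ 2 != 0 ->
  (((pc * b0 + qc * b1) / (b0 ^+ 2 + b1 ^+ 2) - (pc * a0 + qc * a1) / (a0 ^+ 2 + a1 ^+ 2)) ^+ 2 +
   ((- qc * b0 + pc * b1) / (b0 ^+ 2 + b1 ^+ 2) - (- qc * a0 + pc * a1) / (a0 ^+ 2 + a1 ^+ 2)) ^+ 2)
  * ((a0 ^+ 2 + a1 ^+ 2) * (b0 ^+ 2 + b1 ^+ 2))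
  = (pc ^+ 2 + qc ^+ 2) * ((b0 - a0) ^+ 2 + (b1 - a1) ^+ 2).
Proof. move=> ha hb; field; by rewrite ?ha ?hb. Qed.

Lemma key pc qc (vmin : R) a b : 0 < vmin -> vmin <= norm2 a -> vmin <= norm2 b ->
  norm2 (ycp pc qc b - ycp pc qc a) <= Num.sqrt (pc ^+ 2 + qc ^+ 2) / vmin ^+ 2 * norm2 (b - a).
Proof.
move=> hv ha hb.
have ha2 : vmin ^+ 2 <= inner a a.
  rewrite -sqr_norm2; have := norm2_ge0 a; nra.
have hb2 : vmin ^+ 2 <= inner b b.
  rewrite -sqr_norm2; have := norm2_ge0 b; nra.
have hS : 0 <= pc ^+ 2 + qc ^+ 2 by nra.
rewrite -ler_sqr ?nnegrE; last first.
- apply: mulr_ge0; last exact: norm2_ge0.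
  by apply: divr_ge0; [exact: sqrtr_ge0 | nra].
- exact: norm2_ge0.
rewrite exprMn sqr_norm2 sqr_norm2 expr_div_n sqr_sqrtr // !innerB2 !ycp0 !ycp1.
rewrite inner2 in ha2; rewrite inner2 in hb2.
move: ha2 hb2.
set a0 := a 0 0; set a1 := a 1 0; set b0 := b 0 0; set b1 := b 1 0 => ha2 hb2.
have hna : a0 ^+ 2 + a1 ^+ 2 != 0 by apply/negP => /eqP h; nra.
have hnb : b0 ^+ 2 + b1 ^+ 2 != 0 by apply/negP => /eqP h; nra.
have hid := @ident pc qc a0 a1 b0 b1 hna hnb.
set Dy := (X in X * _ = _) in hid.
have hDy : 0 <= Dy by rewrite /Dy; apply: addr_ge0; apply: sqr_ge0.
change (Dy <= (pc ^+ 2 + qc ^+ 2) / vmin ^+ 2 ^+ 2 * ((b0 - a0) ^+ 2 + (b1 - a1) ^+ 2)).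
have hv4 : 0 < vmin ^+ 2 ^+ 2 by rewrite !exprn_gt0.
rewrite mulrAC ler_pdivlMr // -hid.
apply: ler_wpM2l => //.
rewrite !expr2 in ha2 hb2 *.
have h1 : 0 <= vmin * vmin by nra.
nra.
Qed.
End S.

Theorem lemma1 (R : realType) (pc qc vmin : R)
  (hp : 0 <= pc) (hq : 0 <= qc) (hv : 0 < vmin) :
  SRG (ycp_dom vmin) (ycp pc qc) `<=` SRG_hat pc qc vmin.
Proof.
move=> z [u1 [u2 [D1 D2 hne hAne hz]]].
move: hz => /=.
set nd := norm2 (u2 - u1); set ndy := norm2 (ycp pc qc u2 - ycp pc qc u1).
set th := angle _ _ => hz.
have hnd : 0 < nd by apply: norm2_gt0; rewrite subr_eq0 eq_sym.
have hndy : 0 < ndy by apply: norm2_gt0; rewrite subr_eq0.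
have hx : -1 <= inner (u2 - u1) (ycp pc qc u2 - ycp pc qc u1) / (nd * ndy) <= 1.
  rewrite -ler_norml normrM normfV (gtr0_norm (mulr_gt0 hnd hndy)) ler_pdivrMr ?mulr_gt0 // mul1r.
  exact: CS.
have th0 : 0 <= th by exact: acos_ge0.
have thpi : th <= pi by exact: acos_lepi.
have hpi := @pi_gt0 R.
have hg0 : 0 <= ndy / nd by apply: divr_ge0; apply: ltW.
have hg : ndy / nd <= sigma_max (Mcpl pc qc) / vmin ^+ 2.
  rewrite sigma_maxE ler_pdivrMr //; exact: key.
case: hz => ->.
- exists (ndy / nd), th; split => //; [apply/andP; split => //; lra | by apply/andP].
- exists (ndy / nd), (- th); split => //; [apply/andP; split => //; lra | by apply/andP].
Qed.
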